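(* Let $0<p\leqslant q:=1-p$, let $\tilde A_k$ be as in the context and let $0<\varepsilon<\pi/2$. Then there exist $\varepsilon'\in(0,1)$ and absolute constants (independent of $k$ and $z$) such that, for $|z|\geqslant1$: (i) for $|\arg(z)|\leqslant\varepsilon$, $\tilde A_k(z)=O\left(|z|^{\varepsilon'}\right)$ uniformly in $z$ and $k\geqslant0$; (ii) for $\varepsilon\leqslant|\arg(z)|\leqslant\pi$, $e^z\tilde A_k(z)=O\left(e^{(1-\varepsilon')|z|}\right)$ uniformly in $z$ and $k\geqslant0$.
   Context: The random variables $X_n$ are defined by $X_0=0$ and $X_n \stackrel{d}{=} X_{I_n}+1$ for $n\geqslant 1$, where $(X_n)$ and $(I_n)$ are independent and $\mathbb{P}(I_n=k)=\binom{n}{k}\frac{p^kq^{n-k}-p^k(q-p)^{n-k}}{1-q^n}$ for $k=0,\dots,n-1$. For $k\geqslant0$, $\tilde A_k(z):=e^{-z}\sum_{n\geqslant0}\mathbb{P}(X_n=k)z^n/n!$ (entire functions). They satisfy $\tilde A_0(z)=e^{-z}$ and $\tilde{A}_{k+1}(z)=\left(1-e^{-pz}\right)\tilde{A}_k(pz)+e^{-pz}\tilde{A}_{k+1}(qz)$ for $k\geqslant0$. *)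

(* Defs.v *)
From Stdlib Require Import Reals Lra.
From Coquelicot Require Import Coquelicot.
Open Scope R_scope.

Definition probI (p : R) (n j : nat) : R :=
  let q := 1 - p in
  Binomial.C n j * (p ^ j * q ^ (n - j) - p ^ j * (q - p) ^ (n - j)) / (1 - q ^ n).

(* probX p k n = P(X_n = k), from X_0 = 0 and X_n =d X_{I_n} + 1 (n >= 1),
   with (X_n) and (I_n) independent and I_n in {0,..,n-1}:
   P(X_n = 0) = [n = 0];  P(X_n = k+1) = sum_{j=0}^{n-1} P(I_n = j) P(X_j = k) (n>=1). *)
Fixpoint probX (p : R) (k : nat) (n : nat) : R :=
  match k with
  | O => match n with O => 1 | S _ => 0 end
  | S k' => match n with
            | O => 0
            | S m => sum_f_R0 (fun j => probI p n j * probX p k' j) m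
            end
  end.

Definition Cexp (z : C) : C :=
  (exp (Re z) * cos (Im z), exp (Re z) * sin (Im z)).

Definition Aterm (p : R) (k : nat) (z : C) (n : nat) : C :=
  Cmult (RtoC (probX p k n / INR (Factorial.fact n))) (pow_n z n).

(* sum_{n>=0} P(X_n = k) z^n / n!  (an everywhere convergent series),
   computed as Series of real part + i Series of imaginary part *)
Definition Aseries (p : R) (k : nat) (z : C) : C :=
  (Series (fun n => Re (Aterm p k z n)), Series (fun n => Im (Aterm p k z n))).

Definition Atilde (p : R) (k : nat) (z : C) : C :=
  Cmult (Cexp (Copp z)) (Aseries p k z).

Definition has_arg (z : C) (theta : R) : Prop :=
  z = (Cmod z * cos theta, Cmod z * sin theta).

(* Main.v *)
Require Import Defs.
From Stdlib Require Import Reals Lra Lia.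
From Coquelicot Require Import Coquelicot.
Open Scope R_scope.


Definition CSer (u : nat -> C) : C :=
  (Series (fun n => Re (u n)), Series (fun n => Im (u n))).
Definition cis (u : nat -> C) (l : C) : Prop :=
  is_series (fun n => Re (u n)) (Re l) /\ is_series (fun n => Im (u n)) (Im l).

Lemma CSer_cis u l : cis u l -> CSer u = l.
Proof.
  intros [H1 H2]. unfold CSer. destruct l as [a b].
  rewrite (is_series_unique _ _ H1), (is_series_unique _ _ H2). reflexivity.
Qed.

Lemma iss_ext (a b : nat -> R) l : (forall n, a n = b n) -> is_series a l -> is_series b l.
Proof. intros H H1. now apply (is_series_ext a b). Qed.

Lemma iss_plus (a b : nat -> R) la lb : is_series a la -> is_series b lb ->
  is_series (fun n => a n + b n) (la + lb).
Proof. intros. apply (is_series_plus a b); auto. Qed.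

Lemma iss_minus (a b : nat -> R) la lb : is_series a la -> is_series b lb ->
  is_series (fun n => a n - b n) (la - lb).
Proof. intros. apply (is_series_minus a b); auto. Qed.

Lemma iss_scal (c : R) (a : nat -> R) la : is_series a la ->
  is_series (fun n => c * a n) (c * la).
Proof. intros. apply (is_series_scal_l c a); auto. Qed.

Lemma cis_ext u v l : (forall n, u n = v n) -> cis u l -> cis v l.
Proof. intros H [H1 H2]; split; eapply iss_ext; eauto; intros; simpl; now rewrite H. Qed.

Lemma cis_plus u v a b : cis u a -> cis v b -> cis (fun n => Cplus (u n) (v n)) (Cplus a b).
Proof. intros [H1 H2] [H3 H4]; split; simpl; apply iss_plus; auto. Qed.

Lemma cis_minus u v a b : cis u a -> cis v b -> cis (fun n => Cminus (u n) (v n)) (Cminus a b).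
Proof. intros [H1 H2] [H3 H4]; split.
  - apply (iss_ext (fun n => Re (u n) - Re (v n))). intros; unfold Re; simpl; ring.
    replace (Re (a - b)%C) with (Re a - Re b) by (unfold Re; simpl; ring). apply iss_minus; auto.
  - apply (iss_ext (fun n => Im (u n) - Im (v n))). intros; unfold Im; simpl; ring.
    replace (Im (a - b)%C) with (Im a - Im b) by (unfold Im; simpl; ring). apply iss_minus; auto.
Qed.

Lemma ex_re u : ex_series (fun n => Cmod (u n)) -> ex_series (fun n => Rabs (Re (u n))).
Proof. intros H. apply (@ex_series_le R_AbsRing R_CompleteNormedModule _ (fun n => Cmod (u n))); auto.
  intros n. unfold norm; simpl. unfold abs; simpl. rewrite Rabs_Rabsolu. apply re_le_Cmod. Qed.

Lemma im_le_Cmod c : Rabs (Im c) <= Cmod c.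
Proof. destruct c as [a b]. pose proof (Rmax_Cmod (a,b)). simpl in *.
  eapply Rle_trans; [apply Rmax_r|]; eauto. Qed.

Lemma ex_im u : ex_series (fun n => Cmod (u n)) -> ex_series (fun n => Rabs (Im (u n))).
Proof. intros H. apply (@ex_series_le R_AbsRing R_CompleteNormedModule _ (fun n => Cmod (u n))); auto.
  intros n. unfold norm; simpl. unfold abs; simpl. rewrite Rabs_Rabsolu. apply im_le_Cmod. Qed.

Lemma cis_abs u : ex_series (fun n => Cmod (u n)) -> cis u (CSer u).
Proof. intros H. split; simpl; apply Series_correct; apply ex_series_Rabs.
  apply ex_re; auto. apply ex_im; auto. Qed.

Fixpoint csum (f : nat -> C) (n : nat) : C :=
  match n with O => f O | S m => Cplus (csum f m) (f (S m)) end.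

Lemma re_csum f n : Re (csum f n) = sum_f_R0 (fun k => Re (f k)) n.
Proof. induction n; simpl; auto. rewrite <- IHn. reflexivity. Qed.
Lemma im_csum f n : Im (csum f n) = sum_f_R0 (fun k => Im (f k)) n.
Proof. induction n; simpl; auto. rewrite <- IHn. reflexivity. Qed.

Lemma cis_mult u v a b : ex_series (fun n => Cmod (u n)) -> ex_series (fun n => Cmod (v n)) ->
  cis u a -> cis v b -> cis (fun n => csum (fun k => Cmult (u k) (v (n - k)%nat)) n) (Cmult a b).
Proof.
  intros Hu Hv [H1 H2] [H3 H4].
  pose proof (is_series_mult _ _ _ _ H1 H3 (ex_re _ Hu) (ex_re _ Hv)) as M1.
  pose proof (is_series_mult _ _ _ _ H2 H4 (ex_im _ Hu) (ex_im _ Hv)) as M2.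
  pose proof (is_series_mult _ _ _ _ H1 H4 (ex_re _ Hu) (ex_im _ Hv)) as M3.
  pose proof (is_series_mult _ _ _ _ H2 H3 (ex_im _ Hu) (ex_re _ Hv)) as M4.
  split.
  - eapply iss_ext; [|apply (iss_minus _ _ _ _ M1 M2)].
    intros n. rewrite re_csum, <- minus_sum. apply sum_eq. intros; unfold Re, Im; simpl; ring.
  - eapply iss_ext; [|apply (iss_plus _ _ _ _ M3 M4)].
    intros n. rewrite im_csum, <- sum_plus. apply sum_eq. intros; unfold Re, Im; simpl; ring.
Qed.

Lemma cis_scal (c : C) u a : cis u a -> cis (fun n => Cmult c (u n)) (Cmult c a).
Proof. intros [H1 H2]; split.
  - apply (iss_ext (fun n => Re c * Re (u n) - Im c * Im (u n))). intros; unfold Re, Im; simpl; ring.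
    replace (Re (c * a)%C) with (Re c * Re a - Im c * Im a) by (unfold Re, Im; simpl; ring).
    apply iss_minus; apply iss_scal; auto.
  - apply (iss_ext (fun n => Re c * Im (u n) + Im c * Re (u n))). intros; unfold Re, Im; simpl; ring.
    replace (Im (c * a)%C) with (Re c * Im a + Im c * Re a) by (unfold Re, Im; simpl; ring).
    apply iss_plus; apply iss_scal; auto.
Qed.

Lemma Cmod_le_abs c : Cmod c <= Rabs (Re c) + Rabs (Im c).
Proof.
  pose proof (Cmod2_alt c). pose proof (Cmod_ge_0 c).
  pose proof (pow2_abs (Re c)). pose proof (pow2_abs (Im c)).
  pose proof (Rabs_pos (Re c)). pose proof (Rabs_pos (Im c)).
  nra.
Qed.

Lemma Cmod_csum u n : Cmod (csum u n) <= sum_f_R0 (fun k => Cmod (u k)) n.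
Proof. induction n; simpl. lra. eapply Rle_trans. apply Cmod_triangle. lra. Qed.

Lemma cis_Cmod_le u l : cis u l -> ex_series (fun n => Cmod (u n)) ->
  Cmod l <= Series (fun n => Cmod (u n)).
Proof.
  intros [H1 H2] He. apply Series_correct in He. apply is_series_Reals in He.
  apply is_series_Reals in H1. apply is_series_Reals in H2.
  apply Rle_plus_epsilon. intros eps Heps.
  destruct (H1 (eps/2)) as [N1 HN1]. lra.
  destruct (H2 (eps/2)) as [N2 HN2]. lra.
  set (N := max N1 N2).
  specialize (HN1 N ltac:(lia)). specialize (HN2 N ltac:(lia)).
  unfold Rdist in *.
  assert (Hs : Cmod (csum u N) <= Series (fun n => Cmod (u n))).
  { eapply Rle_trans. apply Cmod_csum. apply sum_incr. exact He. intros; apply Cmod_ge_0. }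
  replace l with (Cplus (Cminus l (csum u N)) (csum u N)) by ring.
  eapply Rle_trans. apply Cmod_triangle.
  pose proof (Cmod_le_abs (Cminus l (csum u N))).
  replace (Re (l - csum u N)%C) with (- (Re (csum u N) - Re l)) in H by (unfold Re; simpl; ring).
  replace (Im (l - csum u N)%C) with (- (Im (csum u N) - Im l)) in H by (unfold Im; simpl; ring).
  rewrite !Rabs_Ropp, re_csum, im_csum in H. lra.
Qed.

Lemma csum_ext_loc f g n : (forall k, (k <= n)%nat -> f k = g k) -> csum f n = csum g n.
Proof. induction n; intros H; simpl. apply H; lia. rewrite IHn, H; auto. Qed.

Lemma csum_mult_l c f n : Cmult c (csum f n) = csum (fun k => Cmult c (f k)) n.
Proof. induction n; simpl; auto. rewrite <- IHn. ring. Qed.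

Lemma csum_plus f g n : csum (fun k => Cplus (f k) (g k)) n = Cplus (csum f n) (csum g n).
Proof. induction n; simpl; auto. rewrite IHn. ring. Qed.

Lemma csum_shift f n : csum f (S n) = Cplus (f O) (csum (fun k => f (S k)) n).
Proof. induction n; simpl; auto. simpl in IHn. rewrite IHn. ring. Qed.

Definition Cz (n k : nat) : R := if Nat.leb k n then Binomial.C n k else 0.

Lemma Cz_pascal n k : Cz (S n) (S k) = Cz n k + Cz n (S k).
Proof.
  unfold Cz. destruct (Nat.lt_trichotomy k n) as [H|[H|H]].
  - replace (Nat.leb (S k) (S n)) with true by (symmetry; apply Nat.leb_le; lia).
    replace (Nat.leb k n) with true by (symmetry; apply Nat.leb_le; lia).
    replace (Nat.leb (S k) n) with true by (symmetry; apply Nat.leb_le; lia).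
    symmetry; apply pascal; auto.
  - subst k. rewrite Nat.leb_refl. rewrite Nat.leb_refl.
    replace (Nat.leb (S n) n) with false by (symmetry; apply Nat.leb_gt; lia).
    rewrite !C_n_n. ring.
  - replace (Nat.leb (S k) (S n)) with false by (symmetry; apply Nat.leb_gt; lia).
    replace (Nat.leb k n) with false by (symmetry; apply Nat.leb_gt; lia).
    replace (Nat.leb (S k) n) with false by (symmetry; apply Nat.leb_gt; lia). ring.
Qed.

Lemma Cz_0 n : Cz n 0 = 1.
Proof. unfold Cz. simpl. apply C_n_0. Qed.

Lemma Cz_big n : Cz n (S n) = 0.
Proof. unfold Cz. replace (Nat.leb (S n) n) with false by (symmetry; apply Nat.leb_gt; lia). auto. Qed.

Lemma Cbinom (a b : C) n :
  Cpow (Cplus a b) n = csum (fun k => Cmult (Cmult (RtoC (Cz n k)) (Cpow a k)) (Cpow b (n - k))) n.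
Proof.
  induction n.
  - simpl. rewrite Cz_0. ring.
  - change (Cpow (Cplus a b) (S n)) with (Cmult (Cplus a b) (Cpow (Cplus a b) n)).
    rewrite IHn, Cmult_plus_distr_r, !csum_mult_l.
    rewrite csum_shift. simpl (S n - 0)%nat.
    rewrite Cz_0.
    set (H := fun k => Cmult (Cmult (RtoC (Cz n (S k))) (Cpow a (S k))) (Cpow b (n - k))).
    assert (E1 : csum (fun k => Cmult (Cmult (RtoC (Cz (S n) (S k))) (Cpow a (S k))) (Cpow b (S n - S k))) n
      = Cplus (csum (fun k => Cmult a (Cmult (Cmult (RtoC (Cz n k)) (Cpow a k)) (Cpow b (n - k)))) n)
              (csum H n)).
    { rewrite <- csum_plus. apply csum_ext_loc. intros k Hk. unfold H.
      rewrite Cz_pascal. simpl (S n - S k)%nat. rewrite RtoC_plus. simpl Cpow. ring. }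
    assert (E2 : csum (fun k => Cmult b (Cmult (Cmult (RtoC (Cz n k)) (Cpow a k)) (Cpow b (n - k)))) n
      = Cplus (Cpow b (S n)) (csum H n)).
    { set (K := fun k => Cmult (Cmult (RtoC (Cz n k)) (Cpow a k)) (Cpow b (S n - k))).
      transitivity (csum K (S n)).
      - simpl csum at 2. unfold K at 2. rewrite Cz_big. rewrite Cplus_comm.
        replace (Cmult (Cmult (RtoC 0) (Cpow a (S n))) (Cpow b (S n - S n))) with (RtoC 0) by ring.
        rewrite Cplus_0_l. apply csum_ext_loc. intros k Hk. unfold K.
        replace (S n - k)%nat with (S (n - k)) by lia. simpl Cpow. ring.
      - rewrite csum_shift. unfold K at 1. rewrite Cz_0. simpl (S n - 0)%nat.
        f_equal. simpl Cpow. ring. }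
    rewrite E1, E2. simpl Cpow. ring.
Qed.

Definition eterm (w : C) (n : nat) : C := Cmult (RtoC (/ INR (Factorial.fact n))) (Cpow w n).
Definition ce (w : C) : C := CSer (eterm w).

Lemma is_exp_series x : is_series (fun n => / INR (Factorial.fact n) * x ^ n) (exp x).
Proof. apply is_series_Reals. unfold exp. destruct (exist_exp x) as [l Hl]. simpl. exact Hl. Qed.

Lemma Cmod_eterm w n : Cmod (eterm w n) = / INR (Factorial.fact n) * Cmod w ^ n.
Proof. unfold eterm. rewrite Cmod_mult, Cmod_R, Cmod_pow. rewrite Rabs_pos_eq. auto.
  left; apply Rinv_0_lt_compat, INR_fact_lt_0. Qed.

Lemma eterm_abs w : ex_series (fun n => Cmod (eterm w n)).
Proof. exists (exp (Cmod w)). eapply iss_ext; [|apply is_exp_series]. intros; simpl. now rewrite Cmod_eterm. Qed.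

Lemma ce_cis w : cis (eterm w) (ce w).
Proof. apply cis_abs, eterm_abs. Qed.

Lemma ce_plus a b : ce (Cplus a b) = Cmult (ce a) (ce b).
Proof.
  pose proof (cis_mult _ _ _ _ (eterm_abs a) (eterm_abs b) (ce_cis a) (ce_cis b)) as H.
  unfold ce at 1. apply CSer_cis. eapply cis_ext; [|exact H].
  intros n. unfold eterm at 3. rewrite Cbinom, csum_mult_l. apply csum_ext_loc.
  intros k Hk. unfold eterm.
  assert (E : / INR (Factorial.fact n) * Cz n k = / INR (Factorial.fact k) * / INR (Factorial.fact (n - k))).
  { unfold Cz. replace (Nat.leb k n) with true by (symmetry; apply Nat.leb_le; lia).
    unfold Binomial.C. field. repeat split; apply INR_fact_neq_0. }
  transitivity (Cmult (Cmult (RtoC (/ INR (Factorial.fact k) * / INR (Factorial.fact (n - k)))) (Cpow a k)) (Cpow b (n - k))).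
  - rewrite RtoC_mult. ring.
  - rewrite <- E, RtoC_mult. ring.
Qed.

Lemma iss_partial (u : nat -> R) l : (forall n, sum_f_R0 u n = l) -> is_series u l.
Proof. intros H. apply is_series_Reals. intros eps Heps. exists O. intros n _.
  rewrite H. unfold Rdist. rewrite Rminus_diag, Rabs_R0. lra. Qed.

Lemma ce_real x : ce (RtoC x) = RtoC (exp x).
Proof.
  apply CSer_cis. split.
  - eapply iss_ext; [|apply is_exp_series]. intros n. unfold eterm.
    rewrite <- RtoC_pow, <- RtoC_mult. reflexivity.
  - assert (Z : forall n, Im (eterm (RtoC x) n) = 0).
    { intros n. unfold eterm. rewrite <- RtoC_pow, <- RtoC_mult. reflexivity. }
    apply iss_partial. intros n. induction n.
    + exact (Z O).
    + rewrite tech5, IHn, Z. unfold Im; simpl. ring.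
Qed.

Lemma inter_even (u v : nat -> R) l : infinite_sum v l -> (forall m, u (2*m)%nat = v m) ->
  (forall m, u (S (2*m)) = 0) -> infinite_sum u l.
Proof.
  intros Hv He Ho.
  assert (P : forall m, sum_f_R0 u (2*m) = sum_f_R0 v m /\ sum_f_R0 u (S (2*m)) = sum_f_R0 v m).
  { induction m.
    - pose proof (He O) as H0. pose proof (Ho O) as H1. simpl in *. lra.
    - replace (2 * S m)%nat with (S (S (2*m))) by lia. rewrite !tech5.
      assert (u (S (S (2*m))) = v (S m)) by (rewrite <- He; f_equal; lia).
      pose proof (Ho (S m)). replace (2 * S m)%nat with (S (S (2*m))) in H0 by lia.
      destruct IHm. pose proof (Ho m). split; lra. }
  intros eps Heps. destruct (Hv eps Heps) as [N HN]. exists (2*N)%nat. intros n Hn.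
  destruct (Nat.Even_or_Odd n) as [[m Hm]|[m Hm]]; subst n.
  - rewrite (proj1 (P m)). apply HN. lia.
  - replace (2*m+1)%nat with (S (2*m)) by lia. rewrite (proj2 (P m)). apply HN; lia.
Qed.

Lemma inter_odd (u v : nat -> R) l : infinite_sum v l -> (forall m, u (2*m)%nat = 0) ->
  (forall m, u (S (2*m)) = v m) -> infinite_sum u l.
Proof.
  intros Hv He Ho.
  assert (P : forall m, sum_f_R0 u (S (2*m)) = sum_f_R0 v m /\ sum_f_R0 u (2 * S m) = sum_f_R0 v m).
  { induction m.
    - pose proof (He O) as H0. pose proof (Ho O) as H1. pose proof (He 1%nat) as H2. simpl in *. lra.
    - destruct IHm as [I1 I2].
      assert (A1 : sum_f_R0 u (S (2 * S m)) = sum_f_R0 v (S m)).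
      { rewrite tech5, I2, tech5, Ho. auto. }
      split; auto.
      replace (2 * S (S m))%nat with (S (S (2 * S m))) by lia.
      rewrite tech5, A1. pose proof (He (S (S m))). replace (2 * S (S m))%nat with (S (S (2 * S m))) in H by lia.
      lra. }
  intros eps Heps. destruct (Hv eps Heps) as [N HN]. exists (S (2*N))%nat. intros n Hn.
  destruct (Nat.Even_or_Odd n) as [[m Hm]|[m Hm]]; subst n.
  - destruct m as [|m]. lia. rewrite (proj2 (P m)). apply HN. lia.
  - replace (2*m+1)%nat with (S (2*m)) by lia. rewrite (proj1 (P m)). apply HN; lia.
Qed.

Lemma Cpow_iy y m : Cpow (0,y) (2*m) = ((-1)^m * y^(2*m), 0) /\
  Cpow (0,y) (S (2*m)) = (0, (-1)^m * y^(S (2*m))).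
Proof.
  induction m.
  - simpl. split; apply injective_projections; simpl; ring.
  - replace (2 * S m)%nat with (S (S (2*m))) by lia.
    destruct IHm as [I1 I2]. simpl Cpow in *. rewrite I2.
    split; apply injective_projections; simpl; ring.
Qed.

Lemma ce_imag y : ce (0,y) = (cos y, sin y).
Proof.
  apply CSer_cis. split.
  - apply is_series_Reals. simpl Re.
    unfold cos. destruct (exist_cos (Rsqr y)) as [l Hl]. unfold cos_in in Hl.
    apply (inter_even _ _ _ Hl).
    + intros m. unfold eterm. rewrite (proj1 (Cpow_iy y m)). unfold Re, Cmult, RtoC; cbn [fst snd].
      unfold cos_n. rewrite Rsqr_pow2, <- pow_mult. field. apply INR_fact_neq_0.
    + intros m. unfold eterm. rewrite (proj2 (Cpow_iy y m)). unfold Re; simpl. ring.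
  - apply is_series_Reals. simpl Im.
    unfold sin. destruct (exist_sin (Rsqr y)) as [l Hl]. unfold sin_in in Hl.
    apply is_series_Reals in Hl. apply (iss_scal y) in Hl. apply is_series_Reals in Hl.
    apply (inter_odd _ _ _ Hl).
    + intros m. unfold eterm. rewrite (proj1 (Cpow_iy y m)). unfold Im; simpl. ring.
    + intros m. unfold eterm. rewrite (proj2 (Cpow_iy y m)). unfold Im, Cmult, RtoC; cbn [fst snd].
      unfold sin_n. rewrite Rsqr_pow2, <- pow_mult. replace (2 * m + 1)%nat with (S (2*m)) by lia.
      rewrite <- tech_pow_Rmult. field. apply INR_fact_neq_0.
Qed.

Lemma Cexp_ce w : Cexp w = ce w.
Proof.
  destruct w as [x y].
  replace (x,y) with (Cplus (RtoC x) (0,y)) by (apply injective_projections; simpl; ring).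
  rewrite ce_plus, ce_real, ce_imag. unfold Cexp.
  apply injective_projections; simpl; rewrite Rplus_0_r, Rplus_0_l; ring.
Qed.

Lemma pow_lt1 x m : 0 <= x < 1 -> x ^ (S m) < 1.
Proof. intros H. induction m. simpl; lra. change (x ^ S (S m)) with (x * x ^ S m).
  pose proof (pow_le x (S m) (proj1 H)). nra. Qed.

Lemma C_pos n j : 0 < Binomial.C n j.
Proof. unfold Binomial.C. apply Rdiv_lt_0_compat. apply INR_fact_lt_0.
  apply Rmult_lt_0_compat; apply INR_fact_lt_0. Qed.

Section Prob.
Variable p : R.
Hypothesis hp0 : 0 < p.
Hypothesis hpq : p <= 1 - p.

Lemma D_pos m : 0 < 1 - (1 - p) ^ (S m).
Proof. pose proof (pow_lt1 (1-p) m ltac:(lra)). lra. Qed.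

Lemma probI_nonneg m j : 0 <= probI p (S m) j.
Proof.
  unfold probI; cbv zeta. pose proof (C_pos (S m) j). pose proof (D_pos m).
  assert (0 <= p ^ j * (1 - p) ^ (S m - j) - p ^ j * (1 - p - p) ^ (S m - j)).
  { pose proof (pow_le p j ltac:(lra)). pose proof (pow_incr (1-p-p) (1-p) (S m - j) ltac:(lra)). nra. }
  apply Rmult_le_pos. apply Rmult_le_pos; lra. left; apply Rinv_0_lt_compat; lra.
Qed.

Lemma probI_sum m : sum_f_R0 (probI p (S m)) m = 1.
Proof.
  assert (HD : 0 < 1 - (1 - p) ^ (S m)) by apply D_pos.
  transitivity (sum_f_R0 (fun j => (Binomial.C (S m) j * p ^ j * (1 - p) ^ (S m - j)
     - Binomial.C (S m) j * p ^ j * (1 - p - p) ^ (S m - j)) * / (1 - (1 - p) ^ (S m))) m).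
  { apply sum_eq. intros j _. unfold probI; cbv zeta. unfold Rdiv. ring. }
  rewrite <- scal_sum, minus_sum.
  pose proof (binomial p (1 - p) (S m)) as E1. pose proof (binomial p (1-p-p) (S m)) as E2.
  rewrite tech5 in E1, E2.
  replace (p + (1 - p)) with 1 in E1 by ring. rewrite pow1 in E1.
  replace (p + (1 - p - p)) with (1 - p) in E2 by ring.
  rewrite Nat.sub_diag, C_n_n, pow_O in E1, E2.
  set (S1 := sum_f_R0 (fun i => Binomial.C (S m) i * p ^ i * (1 - p) ^ (S m - i)) m) in *.
  set (S2 := sum_f_R0 (fun i => Binomial.C (S m) i * p ^ i * (1 - p - p) ^ (S m - i)) m) in *.
  replace S1 with (1 - p ^ S m) by lra. replace S2 with ((1 - p) ^ S m - p ^ S m) by lra.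
  field. lra.
Qed.

Lemma probX_S k m : probX p (S k) (S m) = sum_f_R0 (fun j => probI p (S m) j * probX p k j) m.
Proof. reflexivity. Qed.

Lemma probX_bounds k n : 0 <= probX p k n <= 1.
Proof.
  revert n. induction k; intros n.
  - destruct n; simpl; lra.
  - destruct n. simpl; lra. rewrite probX_S. split.
    + apply cond_pos_sum. intros j. apply Rmult_le_pos. apply probI_nonneg. apply IHk.
    + rewrite <- (probI_sum n). apply sum_growing. intros j.
      pose proof (probI_nonneg n j). pose proof (IHk j). nra.
Qed.

Definition hterm (k n : nat) (b : R) (j : nat) : R :=
  probX p k j / INR (Factorial.fact j) * p ^ j * (/ INR (Factorial.fact (n - j)) * b ^ (n - j)).

Lemma RI k n : probX p (S k) n / INR (Factorial.fact n) =
  probX p (S k) n / INR (Factorial.fact n) * (1 - p) ^ n +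
  (sum_f_R0 (hterm k n (1 - p)) n - sum_f_R0 (hterm k n (1 - p - p)) n).
Proof.
  destruct n as [|m].
  - unfold hterm. simpl. ring.
  - rewrite <- minus_sum, tech5. unfold hterm at 3 4. rewrite Nat.sub_diag. simpl pow at 3 4.
    set (D := 1 - (1 - p) ^ (S m)). assert (HD : 0 < D) by apply D_pos.
    assert (E : probX p (S k) (S m) / INR (Factorial.fact (S m)) * D =
       sum_f_R0 (fun j => hterm k (S m) (1 - p) j - hterm k (S m) (1 - p - p) j) m).
    { rewrite probX_S. unfold Rdiv at 1. rewrite Rmult_assoc, Rmult_comm, scal_sum.
      apply sum_eq. intros j Hj. unfold probI, hterm, D; cbv zeta. unfold Binomial.C.
      field. pose proof (INR_fact_neq_0 j). pose proof (INR_fact_neq_0 (S m)).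
      pose proof (INR_fact_neq_0 (S m - j)). fold D. repeat split; lra. }
    unfold D in E. rewrite <- E, pow_O. simpl pow. ring.
Qed.

End Prob.

Lemma pow_n_Cpow (z : C) n : pow_n z n = Cpow z n.
Proof. induction n; simpl; auto; rewrite IHn; reflexivity. Qed.

Lemma Cpow_scal c z n : Cpow (Cmult (RtoC c) z) n = Cmult (RtoC (c ^ n)) (Cpow z n).
Proof. induction n; simpl. ring. rewrite IHn, RtoC_mult. ring. Qed.

Lemma Cpow_add z a b : Cpow z (a + b) = Cmult (Cpow z a) (Cpow z b).
Proof. induction a; simpl. ring. rewrite IHa. ring. Qed.

Lemma csum_RtoC h Z n : csum (fun j => Cmult (RtoC (h j)) Z) n = Cmult (RtoC (sum_f_R0 h n)) Z.
Proof. induction n; simpl; auto. rewrite IHn, RtoC_plus. ring. Qed.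

Section G.
Variable p : R.
Hypothesis hp0 : 0 < p.
Hypothesis hpq : p <= 1 - p.

Lemma Cmod_Aterm k z n : Cmod (Aterm p k z n) <= / INR (Factorial.fact n) * Cmod z ^ n.
Proof.
  unfold Aterm. rewrite Cmod_mult, Cmod_R, pow_n_Cpow, Cmod_pow.
  pose proof (probX_bounds p hp0 hpq k n). pose proof (INR_fact_lt_0 n).
  rewrite Rabs_pos_eq. 2: { apply Rdiv_le_0_compat; lra. }
  apply Rmult_le_compat_r. apply pow_le, Cmod_ge_0.
  unfold Rdiv. rewrite <- (Rmult_1_l (/ _)) at 2. apply Rmult_le_compat_r.
  left; apply Rinv_0_lt_compat; lra. lra.
Qed.

Lemma Aterm_abs k z : ex_series (fun n => Cmod (Aterm p k z n)).
Proof.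
  apply (@ex_series_le R_AbsRing R_CompleteNormedModule _ (fun n => / INR (Factorial.fact n) * Cmod z ^ n)).
  - intros n. unfold norm; simpl; unfold abs; simpl. rewrite Rabs_pos_eq by apply Cmod_ge_0.
    apply Cmod_Aterm.
  - exists (exp (Cmod z)). apply is_exp_series.
Qed.

Lemma g_cis k z : cis (Aterm p k z) (Aseries p k z).
Proof. apply cis_abs, Aterm_abs. Qed.

Lemma g_bound k z : Cmod (Aseries p k z) <= exp (Cmod z).
Proof.
  eapply Rle_trans. apply cis_Cmod_le. apply g_cis. apply Aterm_abs.
  rewrite <- (is_series_unique _ _ (is_exp_series (Cmod z))).
  apply Series_le. intros n. split. apply Cmod_ge_0. apply Cmod_Aterm.
  exists (exp (Cmod z)). apply is_exp_series.
Qed.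

Lemma g_zero z : Aseries p 0 z = RtoC 1.
Proof.
  apply CSer_cis.
  assert (Z : forall n, Aterm p 0 z n = if Nat.eqb n 0 then RtoC 1 else RtoC 0).
  { intros [|n]; unfold Aterm; rewrite pow_n_Cpow; simpl probX; simpl Nat.eqb;
    apply injective_projections; unfold Cmult, RtoC; cbn [fst snd]; simpl INR; unfold Rdiv; simpl Cpow; cbn [fst snd].
    all: try ring. all: cbv [RtoC fst snd]; field. }
  split; apply iss_partial; intros n; induction n.
  - change (Re (Aterm p 0 z 0) = Re (RtoC 1)). rewrite Z. reflexivity.
  - rewrite tech5, IHn, Z. simpl. ring.
  - change (Im (Aterm p 0 z 0) = Im (RtoC 1)). rewrite Z. reflexivity.
  - rewrite tech5, IHn, Z. simpl. ring.
Qed.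

Lemma G_eq k z :
  Aseries p (S k) z = Cplus (Aseries p (S k) (Cmult (RtoC (1 - p)) z))
     (Cmult (Cminus (Cexp (Cmult (RtoC (1 - p)) z)) (Cexp (Cmult (RtoC (1 - p - p)) z)))
            (Aseries p k (Cmult (RtoC p) z))).
Proof.
  set (pz := Cmult (RtoC p) z).
  pose proof (cis_mult _ _ _ _ (Aterm_abs k pz) (eterm_abs (Cmult (RtoC (1 - p)) z))
     (g_cis k pz) (ce_cis _)) as Hq.
  pose proof (cis_mult _ _ _ _ (Aterm_abs k pz) (eterm_abs (Cmult (RtoC (1 - p - p)) z))
     (g_cis k pz) (ce_cis _)) as Hr.
  pose proof (cis_plus _ _ _ _ (g_cis (S k) (Cmult (RtoC (1 - p)) z)) (cis_minus _ _ _ _ Hq Hr)) as H.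
  rewrite !Cexp_ce.
  replace (Cmult (Cminus (ce (Cmult (RtoC (1 - p)) z)) (ce (Cmult (RtoC (1 - p - p)) z))) (Aseries p k pz))
    with (Cminus (Cmult (Aseries p k pz) (ce (Cmult (RtoC (1 - p)) z)))
                 (Cmult (Aseries p k pz) (ce (Cmult (RtoC (1 - p - p)) z)))) by ring.
  apply CSer_cis. eapply cis_ext; [|exact H]. intros n. simpl.
  assert (CT : forall b : R, csum (fun j => Cmult (Aterm p k pz j) (eterm (Cmult (RtoC b) z) (n - j))) n
     = Cmult (RtoC (sum_f_R0 (hterm p k n b) n)) (Cpow z n)).
  { intros b. rewrite <- csum_RtoC. apply csum_ext_loc. intros j Hj.
    unfold Aterm, eterm, pz, hterm. rewrite !pow_n_Cpow, !Cpow_scal.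
    replace (Cpow z n) with (Cmult (Cpow z j) (Cpow z (n - j))) by (rewrite <- Cpow_add; f_equal; lia).
    rewrite !RtoC_mult. ring. }
  rewrite !CT. unfold Aterm. rewrite !pow_n_Cpow, Cpow_scal.
  pose proof (RI p hp0 hpq k n) as HX.
  set (X := probX p (S k) n / INR (Factorial.fact n)) in *.
  transitivity (Cmult (RtoC (X * (1 - p) ^ n + (sum_f_R0 (hterm p k n (1 - p)) n - sum_f_R0 (hterm p k n (1 - p - p)) n))) (Cpow z n)).
  - rewrite !RtoC_plus, !RtoC_minus, !RtoC_mult. ring.
  - rewrite <- HX. reflexivity.
Qed.

End G.

Lemma Cexp_mul a b c : Re a + Re b = Re c -> Im a + Im b = Im c -> Cmult (Cexp a) (Cexp b) = Cexp c.
Proof. intros H1 H2. unfold Cexp. rewrite <- H1, <- H2, exp_plus, cos_plus, sin_plus.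
  apply injective_projections; simpl; ring. Qed.

Lemma Cmod_Cexp w : Cmod (Cexp w) = exp (Re w).
Proof. unfold Cmod, Cexp; cbn [fst snd].
  replace ((exp (Re w) * cos (Im w)) ^ 2 + (exp (Re w) * sin (Im w)) ^ 2) with (exp (Re w) ^ 2).
  apply sqrt_pow2. left; apply exp_pos.
  pose proof (sin2_cos2 (Im w)). unfold Rsqr in H. nra. Qed.

Lemma Cexp_0 w : Re w = 0 -> Im w = 0 -> Cexp w = RtoC 1.
Proof. intros H1 H2. unfold Cexp. rewrite H1, H2, exp_0, cos_0, sin_0.
  apply injective_projections; simpl; ring. Qed.

Lemma re_sc t w : Re (Cmult (RtoC t) w) = t * Re w.
Proof. unfold Re, Im; simpl; ring. Qed.
Lemma im_sc t w : Im (Cmult (RtoC t) w) = t * Im w.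
Proof. unfold Re, Im; simpl; ring. Qed.
Lemma cmod_sc t w : 0 <= t -> Cmod (Cmult (RtoC t) w) = t * Cmod w.
Proof. intros H. rewrite Cmod_mult, Cmod_R, Rabs_pos_eq; auto. Qed.
Lemma re_opp w : Re (Copp w) = - Re w.
Proof. unfold Re; simpl; ring. Qed.
Lemma im_opp w : Im (Copp w) = - Im w.
Proof. unfold Im; simpl; ring. Qed.

Section Main.
Variable p : R.
Hypothesis hp0 : 0 < p.
Hypothesis hpq : p <= 1 - p.

Lemma F_eq k z :
  Atilde p (S k) z =
  Cplus (Cmult (Cminus (RtoC 1) (Cexp (Copp (Cmult (RtoC p) z)))) (Atilde p k (Cmult (RtoC p) z)))
        (Cmult (Cexp (Copp (Cmult (RtoC p) z))) (Atilde p (S k) (Cmult (RtoC (1 - p)) z))).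
Proof.
  unfold Atilde. rewrite (G_eq p hp0 hpq k z).
  set (E1 := Cexp (Copp (Cmult (RtoC p) z))).
  set (E2 := Cexp (Copp (Cmult (RtoC (1 - p)) z))).
  set (E3 := Cexp (Cmult (RtoC (1 - p)) z)).
  set (E4 := Cexp (Cmult (RtoC (1 - p - p)) z)).
  assert (H0 : Cexp (Copp z) = Cmult E1 E2).
  { unfold E1, E2. symmetry; apply Cexp_mul; rewrite ?re_opp, ?im_opp, ?re_sc, ?im_sc; ring. }
  assert (H23 : Cmult E2 E3 = RtoC 1).
  { unfold E2, E3. rewrite (Cexp_mul _ _ (RtoC 0)). apply Cexp_0; reflexivity.
    all: rewrite ?re_opp, ?im_opp, ?re_sc, ?im_sc; unfold Re, Im; simpl; ring. }
  assert (H24 : Cmult E2 E4 = E1).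
  { unfold E2, E4, E1. apply Cexp_mul; rewrite ?re_opp, ?im_opp, ?re_sc, ?im_sc; ring. }
  rewrite H0.
  set (G := Aseries p (S k) (Cmult (RtoC (1 - p)) z)).
  set (g := Aseries p k (Cmult (RtoC p) z)).
  transitivity (Cplus (Cmult (Cmult E1 E2) G) (Cminus (Cmult (Cmult E1 (Cmult E2 E3)) g) (Cmult (Cmult E1 (Cmult E2 E4)) g))).
  ring. rewrite H23, H24. ring.
Qed.

Lemma Atilde_crude k w : Cmod (Atilde p k w) <= exp (Cmod w - Re w).
Proof.
  unfold Atilde. rewrite Cmod_mult, Cmod_Cexp, re_opp.
  unfold Rminus. rewrite Rplus_comm, exp_plus.
  apply Rmult_le_compat_l. left; apply exp_pos. apply (g_bound p hp0 hpq).
Qed.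

End Main.

Lemma exp_le x y : x <= y -> exp x <= exp y.
Proof. intros [H|H]. left; apply exp_increasing; auto. subst; lra. Qed.

Lemma exp_neg_le t a : 0 < a -> a <= t -> exp (- t) <= / a.
Proof. intros Ha Ht. rewrite exp_Ropp. apply Rinv_le_contravar. auto.
  pose proof (exp_ineq1_le t). lra. Qed.

Lemma Rpower_1_base y : Rpower 1 y = 1.
Proof. unfold Rpower. rewrite ln_1, Rmult_0_r, exp_0. auto. Qed.

Lemma Rpower_pos x y : 0 < Rpower x y.
Proof. unfold Rpower. apply exp_pos. Qed.

Lemma arch q R x : 0 < q < 1 -> 0 < R -> exists N, x <= R / q ^ N.
Proof.
  intros Hq HR. destruct (pow_lt_1_zero q ltac:(rewrite Rabs_pos_eq; lra) (R / (Rabs x + 1)))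
    as [N HN]. { apply Rdiv_lt_0_compat; auto. pose proof (Rabs_pos x); lra. }
  exists N. specialize (HN N (le_n N)). rewrite Rabs_pos_eq in HN by (apply pow_le; lra).
  pose proof (pow_lt q N ltac:(lra)). pose proof (Rabs_pos x). pose proof (Rle_abs x).
  apply (Rmult_lt_compat_r (Rabs x + 1)) in HN; [|lra].
  unfold Rdiv in HN. rewrite Rmult_assoc, Rinv_l, Rmult_1_r in HN by lra.
  apply (Rmult_le_reg_r (q ^ N)). auto. unfold Rdiv. rewrite Rmult_assoc, Rinv_l, Rmult_1_r by lra. nra.
Qed.

Section Bounds.
Variable p : R.
Hypothesis hp0 : 0 < p.
Hypothesis hpq : p <= 1 - p.

Lemma part1 (c e1 : R) : 0 < c -> 0 < e1 -> exists M, forall k w, c * Cmod w <= Re w ->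
  Cmod (Atilde p k w) <= M * Rpower (Rmax 1 (Cmod w)) e1.
Proof.
  intros Hc He1.
  set (q := 1 - p). set (b := Rpower p e1).
  assert (Hb1 : b < 1). { unfold b. rewrite <- (Rpower_1_base e1). apply Rlt_Rpower_l; lra. }
  assert (Hb0 : 0 < b) by apply Rpower_pos.
  set (a := 2 / (1 - b)). assert (Ha : 0 < a) by (unfold a; apply Rdiv_lt_0_compat; lra).
  set (RR := Rmax (1 / p) (a / (p * c))).
  assert (HR1 : 1 / p <= RR) by apply Rmax_l.
  assert (HR2 : a / (p * c) <= RR) by apply Rmax_r.
  assert (Hp1 : 1 <= 1 / p). { apply (Rmult_le_reg_r p); auto. unfold Rdiv. rewrite Rmult_assoc, Rinv_l; lra. }
  assert (HpR : 1 <= p * RR). { apply (Rmult_le_compat_l p) in HR1; [|lra]. unfold Rdiv in HR1.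
    rewrite Rmult_1_l, Rinv_r in HR1; lra. }
  set (M := exp RR). assert (HM : 1 <= M). { unfold M. rewrite <- exp_0. apply exp_le. lra. }
  exists M.
  assert (Bge1 : forall x, 1 <= Rpower (Rmax 1 x) e1).
  { intros x. rewrite <- (Rpower_1_base e1) at 1. apply Rle_Rpower_l. lra. split. lra. apply Rmax_l. }
  assert (Hsm : forall w, RR <= Cmod w -> exp (- (p * (c * Cmod w))) <= (1 - b) / 2).
  { intros w Hw. replace ((1 - b) / 2) with (/ a) by (unfold a; field; lra).
    apply exp_neg_le. auto.
    apply (Rmult_le_compat_l (p * c)) in HR2; [|nra].
    replace (p * c * (a / (p * c))) with a in HR2 by (field; lra). nra. }
  assert (Crude : forall k w, c * Cmod w <= Re w -> Cmod w <= RR ->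
     Cmod (Atilde p k w) <= M * Rpower (Rmax 1 (Cmod w)) e1).
  { intros k w Hs Hw. eapply Rle_trans. apply (Atilde_crude p hp0 hpq).
    pose proof (Bge1 (Cmod w)). pose proof (Cmod_ge_0 w).
    apply Rle_trans with M. unfold M. apply exp_le. nra. nra. }
  intros k. induction k.
  - intros w Hs. unfold Atilde. rewrite g_zero, Cmult_1_r, Cmod_Cexp, re_opp.
    pose proof (Bge1 (Cmod w)). pose proof (Cmod_ge_0 w).
    apply Rle_trans with 1. rewrite <- exp_0. apply exp_le. nra. nra.
  - assert (Step : forall N w, c * Cmod w <= Re w -> Cmod w <= RR / q ^ N ->
      Cmod (Atilde p (S k) w) <= M * Rpower (Rmax 1 (Cmod w)) e1).
    { induction N; intros w Hs Hw.
      - apply Crude; auto. simpl in Hw. lra.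
      - destruct (Rle_dec (Cmod w) RR) as [Hle|Hgt]. apply Crude; auto.
        apply Rnot_le_lt in Hgt.
        pose proof (Cmod_ge_0 w) as Hw0.
        assert (Hw1 : 1 <= Cmod w). { nra. }
        set (P := Rpower (Cmod w) e1). assert (HP : 0 < P) by apply Rpower_pos.
        rewrite (Rmax_right 1 (Cmod w)) by lra. fold P.
        rewrite (F_eq p hp0 hpq).
        set (x := Cmod (Cexp (Copp (Cmult (RtoC p) w)))).
        assert (Hx0 : 0 <= x) by apply Cmod_ge_0.
        assert (Hx : x <= (1 - b) / 2).
        { unfold x. rewrite Cmod_Cexp, re_opp, re_sc. eapply Rle_trans; [|apply (Hsm w); lra].
          apply exp_le. nra. }
        assert (H1 : Cmod (Cminus (RtoC 1) (Cexp (Copp (Cmult (RtoC p) w)))) <= 1 + x).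
        { unfold Cminus. eapply Rle_trans. apply Cmod_triangle. rewrite Cmod_opp, Cmod_1. fold x. lra. }
        assert (H2 : Cmod (Atilde p k (Cmult (RtoC p) w)) <= M * (b * P)).
        { eapply Rle_trans. apply IHk. rewrite cmod_sc, re_sc by lra. nra.
          rewrite cmod_sc by lra. rewrite Rmax_right by nra.
          unfold b, P. rewrite Rpower_mult_distr; lra. }
        assert (H3 : Cmod (Atilde p (S k) (Cmult (RtoC (1 - p)) w)) <= M * P).
        { eapply Rle_trans. apply IHN.
          - rewrite cmod_sc, re_sc by lra. nra.
          - rewrite cmod_sc by lra. fold q. simpl in Hw.
            pose proof (pow_lt q N ltac:(unfold q; lra)).
            apply (Rmult_le_compat_l q) in Hw; [|unfold q; lra].
            assert (Hq0 : 0 < q) by (unfold q; lra). replace (q * (RR / (q * q ^ N))) with (RR / q ^ N) in Hw by (field; split; lra). lra.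
          - apply Rmult_le_compat_l. lra. unfold P. apply Rle_Rpower_l. lra. split. apply Rlt_le_trans with 1; [lra|apply Rmax_l].
            rewrite cmod_sc by lra. apply Rmax_lub. lra. nra. }
        eapply Rle_trans. apply Cmod_triangle. rewrite !Cmod_mult. fold x.
        pose proof (Cmod_ge_0 (Cminus (RtoC 1) (Cexp (Copp (Cmult (RtoC p) w))))).
        pose proof (Cmod_ge_0 (Atilde p k (Cmult (RtoC p) w))).
        pose proof (Cmod_ge_0 (Atilde p (S k) (Cmult (RtoC (1 - p)) w))).
        apply Rle_trans with ((1 + x) * (M * (b * P)) + x * (M * P)).
        apply Rplus_le_compat. apply Rmult_le_compat; auto. apply Rmult_le_compat_l; auto.
        assert ((1 + x) * b + x <= 1) by nra.
        assert (0 < M * P) by nra. nra. }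
    intros w Hs. destruct (arch q RR (Cmod w)) as [N HN]. unfold q; lra. lra.
    apply (Step N); auto.
Qed.

End Bounds.

Section B2.
Variable p : R.
Hypothesis hp0 : 0 < p.
Hypothesis hpq : p <= 1 - p.

Lemma part2 (c e1 : R) : 0 < c -> 0 < e1 -> e1 <= 1/2 -> e1 <= (1 - p) * (1 - c) / 2 ->
  exists K, forall k w, Re w <= c * Cmod w ->
  Cmod (Aseries p k w) <= K * exp ((1 - e1) * Cmod w).
Proof.
  intros Hc He1 He2 He3.
  set (q := 1 - p). assert (Hq0 : 0 < q) by (unfold q; lra).
  set (RR := 2 / p). assert (HRR : p * RR = 2) by (unfold RR; field; lra).
  set (K := Rmax 4 (exp RR)).
  assert (HK4 : 4 <= K) by apply Rmax_l. assert (HKe : exp RR <= K) by apply Rmax_r.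
  exists K.
  assert (Hexp1 : forall w, 1 <= exp ((1 - e1) * Cmod w)).
  { intros w. apply Rle_trans with (exp 0). rewrite exp_0; lra. apply exp_le. pose proof (Cmod_ge_0 w). nra. }
  assert (Crude : forall k w, Cmod w <= RR -> Cmod (Aseries p k w) <= K * exp ((1 - e1) * Cmod w)).
  { intros k w Hw. eapply Rle_trans. apply (g_bound p hp0 hpq).
    pose proof (Hexp1 w). apply Rle_trans with K. eapply Rle_trans; [|exact HKe]. apply exp_le; lra. nra. }
  intros k. induction k.
  - intros w _. rewrite g_zero. rewrite Cmod_R, Rabs_R1. pose proof (Hexp1 w). nra.
  - assert (Step : forall N w, Re w <= c * Cmod w -> Cmod w <= RR / q ^ N ->
      Cmod (Aseries p (S k) w) <= K * exp ((1 - e1) * Cmod w)).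
    { induction N; intros w Hs Hw.
      - apply Crude. simpl in Hw. lra.
      - destruct (Rle_dec (Cmod w) RR) as [Hle|Hgt]. apply Crude; auto.
        apply Rnot_le_lt in Hgt. pose proof (Cmod_ge_0 w) as Hw0.
        set (A := (1 - e1) * Cmod w).
        rewrite (G_eq p hp0 hpq).
        assert (H1 : Cmod (Aseries p (S k) (Cmult (RtoC (1 - p)) w)) <= K * (exp A * / 2)).
        { eapply Rle_trans. apply IHN.
          - rewrite cmod_sc, re_sc by lra. fold q. nra.
          - rewrite cmod_sc by lra. fold q. simpl in Hw.
            pose proof (pow_lt q N Hq0).
            apply (Rmult_le_compat_l q) in Hw; [|lra].
            replace (q * (RR / (q * q ^ N))) with (RR / q ^ N) in Hw by (field; split; lra). lra.
          - apply Rmult_le_compat_l. lra. rewrite cmod_sc by lra.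
            replace ((1 - e1) * ((1 - p) * Cmod w)) with (A + - ((1 - e1) * p * Cmod w)) by (unfold A; ring).
            rewrite exp_plus. apply Rmult_le_compat_l. left; apply exp_pos.
            apply Rle_trans with (exp (- (1))). apply exp_le. assert (p * Cmod w >= 2) by nra. nra.
            rewrite exp_Ropp. apply Rinv_le_contravar. lra. pose proof (exp_ineq1_le 1). lra. }
        assert (H2 : Cmod (Cminus (Cexp (Cmult (RtoC (1 - p)) w)) (Cexp (Cmult (RtoC (1 - p - p)) w)))
                     <= 2 * exp (q * c * Cmod w)).
        { unfold Cminus. eapply Rle_trans. apply Cmod_triangle. rewrite Cmod_opp, !Cmod_Cexp, !re_sc.
          assert (exp ((1 - p) * Re w) <= exp (q * c * Cmod w)) by (apply exp_le; fold q; nra).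
          assert (exp ((1 - p - p) * Re w) <= exp (q * c * Cmod w)).
          { apply exp_le. assert (E : (1-p-p) * Re w <= (1-p-p) * (c * Cmod w)) by (apply Rmult_le_compat_l; lra). assert (0 <= c * Cmod w) by nra. unfold q. nra. }
          lra. }
        assert (H3 : Cmod (Aseries p k (Cmult (RtoC p) w)) <= exp (p * Cmod w)).
        { eapply Rle_trans. apply (g_bound p hp0 hpq). rewrite cmod_sc by lra. lra. }
        assert (H4 : exp (q * c * Cmod w) * exp (p * Cmod w) <= exp A).
        { rewrite <- exp_plus. apply exp_le. unfold A, q. nra. }
        eapply Rle_trans. apply Cmod_triangle. rewrite Cmod_mult.
        pose proof (Cmod_ge_0 (Aseries p k (Cmult (RtoC p) w))).
        pose proof (Cmod_ge_0 (Cminus (Cexp (Cmult (RtoC (1 - p)) w)) (Cexp (Cmult (RtoC (1 - p - p)) w)))).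
        pose proof (exp_pos A). pose proof (exp_pos (q * c * Cmod w)).
        apply Rle_trans with (K * (exp A * / 2) + 2 * exp (q * c * Cmod w) * exp (p * Cmod w)).
        apply Rplus_le_compat. auto. apply Rmult_le_compat; auto.
        nra. }
    intros w Hs. destruct (arch q RR (Cmod w)) as [N HN]. unfold q; lra. unfold RR; apply Rdiv_lt_0_compat; lra.
    apply (Step N); auto.
Qed.

End B2.

Lemma cos_abs t : cos t = cos (Rabs t).
Proof. destruct (Rcase_abs t). rewrite Rabs_left, cos_neg; auto. rewrite Rabs_right; auto. Qed.

Lemma cos_mono a b : 0 <= a -> a <= b -> b <= PI -> cos b <= cos a.
Proof. intros. destruct (Req_dec a b). subst; lra. left; apply cos_decreasing_1; lra. Qed.

Theorem mainTheorem7 (p : R) (hp0 : 0 < p) (hpq : p <= 1 - p)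
  (eps : R) (heps0 : 0 < eps) (heps1 : eps < PI / 2) :
  exists eps' : R, 0 < eps' < 1 /\
  exists K1 K2 : R,
    forall (k : nat) (z : C), 1 <= Cmod z ->
      ((exists theta, has_arg z theta /\ Rabs theta <= eps) ->
         Cmod (Atilde p k z) <= K1 * Rpower (Cmod z) eps') /\
      ((exists theta, has_arg z theta /\ eps <= Rabs theta <= PI) ->
         Cmod (Cmult (Cexp z) (Atilde p k z)) <= K2 * exp ((1 - eps') * Cmod z)).
Proof.
  pose proof PI_RGT_0 as HPI.
  set (c := cos eps).
  assert (Hc0 : 0 < c) by (apply cos_gt_0; lra).
  assert (Hc1 : c < 1) by (rewrite <- cos_0; apply cos_decreasing_1; lra).
  set (e1 := Rmin (1/2) ((1 - p) * (1 - c) / 2)).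
  assert (He0 : 0 < e1) by (apply Rmin_glb_lt; [lra| apply Rdiv_lt_0_compat; [apply Rmult_lt_0_compat|]; lra]).
  assert (He1 : e1 <= 1/2) by apply Rmin_l.
  assert (He2 : e1 <= (1 - p) * (1 - c) / 2) by apply Rmin_r.
  destruct (part1 p hp0 hpq c e1 Hc0 He0) as [M HM].
  destruct (part2 p hp0 hpq c e1 Hc0 He0 He1 He2) as [K HK].
  exists e1. split. lra. exists M, K. intros k z Hz. pose proof (Cmod_ge_0 z). split.
  - intros [t [Ha Ht]].
    assert (Hre : Re z = Cmod z * cos t) by (rewrite Ha at 1; reflexivity).
    assert (c <= cos t) by (unfold c; rewrite (cos_abs t); apply cos_mono; [apply Rabs_pos|lra|lra]).
    specialize (HM k z ltac:(nra)). rewrite Rmax_right in HM by lra. exact HM.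
  - intros [t [Ha Ht]].
    assert (Hre : Re z = Cmod z * cos t) by (rewrite Ha at 1; reflexivity).
    assert (cos t <= c) by (unfold c; rewrite (cos_abs t); apply cos_mono; lra).
    unfold Atilde. rewrite Cmult_assoc, (Cexp_mul z (Copp z) (RtoC 0)), Cexp_0, Cmult_1_l.
    apply HK. nra.
    all: unfold Re, Im; simpl; ring.
Qed.
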